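(* Let $A$ be a Noetherian ring, $\mathcal{R}$ a standard graded ring with $\mathcal{R}_0=A$, $X\in\operatorname{^*Mod}_f(\mathcal{R})$, and set $Y=X/H^0_{\mathcal{R}_+}(X)$. Then $\operatorname{Ass}_A X=\operatorname{Ass}_A Y\cup\operatorname{Ass}_A H^0_{\mathcal{R}_+}(X)$. Moreover, if $P\in\operatorname{Ass}_A Y_s$ for some $s$, then $P\in\operatorname{Ass}_A X_{s+r}$ for some $r\ge1$.
   Context: A standard graded ring $\mathcal{R}=\bigoplus_{n\ge0}\mathcal{R}_n$ with $\mathcal{R}_0=A$ is a Noetherian $\mathbb{N}$-graded commutative ring generated as an $A$-algebra by finitely many elements of $\mathcal{R}_1$; $\mathcal{R}_+=\bigoplus_{n\ge1}\mathcal{R}_n$. $\operatorname{^*Mod}_f(\mathcal{R})$ is the full subcategory of graded $\mathcal{R}$-modules $X=\bigoplus_{n\in\mathbb{Z}}X_n$ with every $X_n$ a finitely generated $A$-module and $X_n=0$ for $n\ll0$. $H^0_{\mathcal{R}_+}(X)=\{x\in X:\mathcal{R}_+^k x=0\text{ for some }k\}$. For a graded module $X$, $\operatorname{Ass}_A X$ denotes the associated primes of $X$ regarded as an $A$-module (equivalently $\bigcup_n\operatorname{Ass}_A X_n$). *)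

(* Defs.v *)
From HB Require Import structures.
From mathcomp Require Import all_boot all_order all_algebra.
Set Implicit Arguments. Unset Strict Implicit. Unset Printing Implicit Defensive.
Import Order.TTheory GRing.Theory Num.Theory.
Local Open Scope ring_scope.

Section CommAlg.
Variable A : comPzRingType.

Definition is_ideal (I : A -> Prop) : Prop :=
  I 0 /\ (forall x y, I x -> I y -> I (x + y)) /\ (forall a x, I x -> I (a * x)).

Definition prime_ideal (P : A -> Prop) : Prop :=
  is_ideal P /\ ~ P 1 /\ (forall a b, P (a * b) -> P a \/ P b).

Definition fg_ideal (I : A -> Prop) : Prop :=
  exists (n : nat) (g : 'I_n -> A), (forall i, I (g i)) /\
    (forall x, I x -> exists c : 'I_n -> A, x = \sum_(i < n) c i * g i).

Definition noetherian : Prop := forall I, is_ideal I -> fg_ideal I.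

Definition idealpow (I : A -> Prop) (k : nat) (y : A) : Prop :=
  exists (m : nat) (a : 'I_m -> A) (r : 'I_m -> 'I_k -> A),
    (forall j i, I (r j i)) /\ y = \sum_(j < m) a j * \prod_(i < k) r j i.
End CommAlg.

Section Graded.
Variables (A R : comPzRingType) (phi : {rmorphism A -> R}) (Rg : nat -> R -> Prop).

(* Rg is a grading R = (+)_{n >= 0} R_n, with R_0 = phi(A) (phi injective). *)
Definition graded_ring : Prop :=
  (forall n, Rg n 0 /\ forall x y, Rg n x -> Rg n y -> Rg n (x - y)) /\
      (forall m n x y, Rg m x -> Rg n y -> Rg (m + n)%N (x * y)) /\
      injective phi /\
      (forall x, Rg 0 x <-> exists a, x = phi a) /\
      (forall x, exists (n : nat) (c : 'I_n -> R),
          (forall i : 'I_n, Rg i (c i)) /\ x = \sum_(i < n) c i) /\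
      (forall (n : nat) (c : 'I_n -> R), (forall i : 'I_n, Rg i (c i)) ->
          \sum_(i < n) c i = 0 -> forall i, c i = 0).

Definition generated_by_deg1 : Prop :=
  exists (n : nat) (g : 'I_n -> R), (forall i, Rg 1 (g i)) /\
    forall S : R -> Prop,
      S 1 -> (forall x y, S x -> S y -> S (x - y)) ->
      (forall x y, S x -> S y -> S (x * y)) ->
      (forall a, S (phi a)) -> (forall i, S (g i)) ->
      forall x, S x.

(* standard graded ring with R_0 = A (Noetherianity of R is a separate
   hypothesis in the theorem). *)
Definition std_graded : Prop := graded_ring /\ generated_by_deg1.

Definition Rplus (x : R) : Prop :=
  exists (n : nat) (c : 'I_n -> R), (forall i : 'I_n, Rg i.+1 (c i)) /\
    x = \sum_(i < n) c i.

Variable X : lmodType R.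

(* X in *Mod_f(R): Z-graded R-module, each X_n a finitely generated A-module,
   X_n = 0 for n << 0. *)
Definition graded_fmod (Xg : int -> X -> Prop) : Prop :=
  (forall n, Xg n 0 /\ forall x y, Xg n x -> Xg n y -> Xg n (x - y)) /\
      (forall (m : nat) (n : int) r x, Rg m r -> Xg n x -> Xg (m%:Z + n) (r *: x)) /\
      (forall x, exists (m : int) (n : nat) (c : 'I_n -> X),
          (forall i : 'I_n, Xg (m + (i : nat)%:Z) (c i)) /\ x = \sum_(i < n) c i) /\
      (forall (m : int) (n : nat) (c : 'I_n -> X),
          (forall i : 'I_n, Xg (m + (i : nat)%:Z) (c i)) ->
          \sum_(i < n) c i = 0 -> forall i, c i = 0) /\
      (forall n : int, exists (k : nat) (g : 'I_k -> X), (forall i, Xg n (g i)) /\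
          forall x, Xg n x -> exists c : 'I_k -> A, x = \sum_(i < k) phi (c i) *: g i) /\
      (exists n0 : int, forall n x, n < n0 -> Xg n x -> x = 0).

Definition H0 (x : X) : Prop :=
  exists k : nat, forall y, idealpow Rplus k y -> y *: x = 0.

Definition AssA (S : X -> Prop) (P : A -> Prop) : Prop :=
  prime_ideal P /\ exists x, S x /\ forall a, P a <-> phi a *: x = 0.

(* P in Ass_A of the image of S in X/N: P prime and P = ann_A(x + N)
   = { a | a x in N } for some x in S. *)
Definition AssQ (S N : X -> Prop) (P : A -> Prop) : Prop :=
  prime_ideal P /\ exists x, S x /\ forall a, P a <-> N (phi a *: x).
End Graded.

(* Main.v *)
Require Import Defs.
From HB Require Import structures.
From mathcomp Require Import all_boot all_order all_algebra.
From Stdlib Require Import Classical.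
Set Implicit Arguments. Unset Strict Implicit. Unset Printing Implicit Defensive.
Import Order.TTheory GRing.Theory Num.Theory.
Local Open Scope ring_scope.

Inductive sums (T : nmodType) (S : T -> Prop) : T -> Prop :=
| sums0 : sums S 0
| sumsD a b : S a -> sums S b -> sums S (a + b).
Arguments sums {T}.
Arguments sums0 {T S}.
Arguments sumsD {T S}.

Lemma sums_add (T : nmodType) (S : T -> Prop) a b :
  sums S a -> sums S b -> sums S (a + b).
Proof.
elim=> [|c d Sc _ IH] Sb; first by rewrite add0r.
rewrite -addrA; apply: sumsD => //; exact: IH.
Qed.

Lemma sums_in (T : nmodType) (S : T -> Prop) a : S a -> sums S a.
Proof. move=> Sa; rewrite -[a]addr0; apply: sumsD => //; exact: sums0. Qed.

Lemma sums_big (T : nmodType) (S : T -> Prop) n (F : 'I_n -> T) :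
  (forall i, sums S (F i)) -> sums S (\sum_(i < n) F i).
Proof. move=> H; elim/big_ind: _ => //; [exact: sums0 | exact: sums_add]. Qed.

Lemma sums_ind' (T : nmodType) (S Q : T -> Prop) : Q 0 ->
  (forall a b, Q a -> Q b -> Q (a+b)) -> (forall a, S a -> Q a) ->
  forall a, sums S a -> Q a.
Proof. move=> Q0 QD QS a; elim => // c d Sc _ IH; apply: QD; auto. Qed.

Lemma sums_mono (T : nmodType) (S S' : T -> Prop) a :
  (forall y, S y -> S' y) -> sums S a -> sums S' a.
Proof.
move=> H; apply: sums_ind'; [exact: sums0| exact: sums_add| ].
by move=> y Sy; apply: sums_in; apply: H.
Qed.

Lemma sums_mulr (R : comPzRingType) (S T : R -> Prop) a b :
  sums S a -> (forall s, S s -> sums T (s * b)) -> sums T (a * b).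
Proof.
move=> Sa H; move: a Sa; apply: sums_ind'.
- by rewrite mul0r; exact: sums0.
- by move=> a c Ha Hc; rewrite mulrDl; apply: sums_add.
- exact: H.
Qed.

Lemma idealpow_add (R : comPzRingType) (I : R -> Prop) k e y :
  idealpow I (k + e) y -> idealpow I k y.
Proof.
case=> m [a [r [Hr ->]]].
exists m, (fun j => a j * \prod_(i < e) r j (rshift k i)),
  (fun j i => r j (lshift e i)); split => //.
by apply: eq_bigr => j _; rewrite big_split_ord /= mulrA mulrAC.
Qed.

Lemma scalerAC' (R : comPzRingType) (X : lmodType R) (a b : R) (v : X) :
  a *: (b *: v) = b *: (a *: v).
Proof. by rewrite !scalerA mulrC. Qed.

Section Core.
Variables (A R : comPzRingType) (phi : {rmorphism A -> R})
  (Rg : nat -> R -> Prop) (X : lmodType R).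
Hypothesis Rg_mul : forall m n x y, Rg m x -> Rg n y -> Rg (m + n)%N (x * y).
Hypothesis Rg_0 : forall n, Rg n 0.
Hypothesis Rg01 : Rg 0 1.

Definition hpos (c : R) := exists d, (1 <= d)%N /\ Rg d c.

Lemma hpos_Rplus c : hpos c -> Rplus Rg c.
Proof.
case=> d [d1 Hc]; case: d d1 Hc => // d _ Hc.
exists d.+1, (fun i : 'I_d.+1 => if i.+1 == d.+1 then c else 0); split.
  by move=> i; case: eqP => [->|_].
rewrite big_ord_recr /= eqxx big1 ?add0r // => i _.
by rewrite eqSS (ltn_eqF (ltn_ord i)).
Qed.

Definition Qn n (h : R) :=
  exists c : 'I_n -> R, (forall i, hpos (c i)) /\ h = \prod_(i < n) c i.

Lemma expand n (r : 'I_n -> R) :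
  (forall i, Rplus Rg (r i)) -> sums (Qn n) (\prod_(i < n) r i).
Proof.
elim: n r => [|n IH] r Hr.
  rewrite big_ord0; apply: sums_in; exists (fun _ => 0); split; first by case.
  by rewrite big_ord0.
rewrite big_ord_recl mulrC.
apply: (sums_mulr (IH _ (fun i => Hr _))) => s [c [Hc ->]].
case: (Hr ord0) => m [c' [Hc' ->]].
rewrite mulr_sumr; apply: sums_big => l; apply: sums_in.
exists (fun i => if unlift ord0 i is Some j then c j else c' l); split.
  move=> i; case: unliftP => [j _|_]; first exact: Hc.
  by exists l.+1; split.
rewrite [RHS]big_ord_recl unlift_none mulrC; congr (_ * _).
by apply: eq_bigr => i _; rewrite liftK.
Qed.

Lemma prod_deg n (c : 'I_n -> R) : (forall i, hpos (c i)) ->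
  exists d, (n <= d)%N /\ Rg d (\prod_(i < n) c i).
Proof.
elim: n c => [|n IH] c Hc; first by exists 0%N; rewrite big_ord0.
rewrite big_ord_recl; case: (Hc ord0) => e [e1 He].
case: (IH _ (fun i => Hc (lift ord0 i))) => d [nd Hd].
exists (e + d)%N; split; last exact: Rg_mul.
by rewrite -add1n leq_add.
Qed.

Lemma H0_common n (v : 'I_n -> X) : (forall i, H0 Rg (v i)) ->
  exists k, forall i y, idealpow (Rplus Rg) k y -> y *: v i = 0.
Proof.
elim: n v => [|n IH] v Hv; first by exists 0%N => -[].
case: (IH (fun i => v (lift ord0 i))) => [i|k Hk]; first exact: Hv.
case: (Hv ord0) => k0 Hk0.
exists (k0 + k)%N => i y Hy.
case: (unliftP ord0 i) => [j ->|->].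
  apply: Hk; apply: (@idealpow_add _ _ k k0); by rewrite addnC.
apply: Hk0; exact: idealpow_add Hy.
Qed.

Variables (x : X) (P : A -> Prop).
Hypothesis noeA : noetherian A.
Hypothesis noeR : noetherian R.
Hypothesis primeP : prime_ideal P.
Hypothesis HP : forall a, P a <-> H0 Rg (phi a *: x).

Lemma Kill_all : exists k, (1 <= k)%N /\
  forall p y, P p -> idealpow (Rplus Rg) k y -> y *: (phi p *: x) = 0.
Proof.
case: (noeA (proj1 primeP)) => n [g [Pg Hg]].
case: (@H0_common n (fun i => phi (g i) *: x)) => [i|k Hk].
  by apply/HP; apply: Pg.
exists k.+1; split => // p y Pp Hy.
have {}Hy : idealpow (Rplus Rg) k y by apply: (@idealpow_add _ _ k 1); rewrite addn1.
case: (Hg p Pp) => c ->.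
rewrite rmorph_sum /= scaler_suml scaler_sumr big1 // => i _.
by rewrite rmorphM /= -scalerA scalerAC' (Hk i y Hy) scaler0.
Qed.

Definition G h := hpos h /\ forall p, P p -> h *: (phi p *: x) = 0.
Definition Lset := sums (fun y => exists r h, G h /\ y = r * h).
Definition Good (y : R) := exists b, ~ P b /\ phi b *: (y *: x) = 0.

Lemma nP1 : ~ P 1.
Proof. by case: primeP => _ []. Qed.

Lemma Pmul a b : P (a * b) -> P a \/ P b.
Proof. by case: primeP => _ [] _; apply. Qed.

Lemma Good0 : Good 0.
Proof. by exists 1; split; [exact: nP1| rewrite scale0r scaler0]. Qed.

Lemma GoodD a c : Good a -> Good c -> Good (a + c).
Proof.
case=> ba [na Ha] [bc [nc Hc]]; exists (ba * bc); split.
  by case/Pmul.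
by rewrite rmorphM scalerDl scalerDr -!scalerA Hc scaler0 scalerAC' Ha scaler0 addr0.
Qed.

Lemma GoodM r y : Good y -> Good (r * y).
Proof.
case=> b [nb Hb]; exists b; split => //.
by rewrite -scalerA scalerAC' Hb scaler0.
Qed.

Lemma uniform m (t : 'I_m -> R) : (forall j, Good (t j)) ->
  exists b, ~ P b /\ forall j, phi b *: (t j *: x) = 0.
Proof.
elim: m t => [|m IH] t Ht; first by exists 1; split; [exact: nP1| case].
case: (IH (fun j => t (lift ord0 j))) => [j|b [nb Hb]]; first exact: Ht.
case: (Ht ord0) => b0 [nb0 Hb0].
exists (b0 * b); split; first by case/Pmul.
move=> j; rewrite rmorphM -scalerA.
case: (unliftP ord0 j) => [j' ->|->].
  by rewrite Hb scaler0.
by rewrite scalerAC' Hb0 scaler0.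
Qed.

Lemma Lset_ideal : is_ideal Lset.
Proof.
split; first exact: sums0.
split; first by move=> a b; apply: sums_add.
move=> a y; move: y; apply: sums_ind'.
- by rewrite mulr0; exact: sums0.
- by move=> b c Hb Hc; rewrite mulrDr; apply: sums_add.
- move=> y [r [h [Gh ->]]]; apply: sums_in; exists (a * r), h; split => //.
  by rewrite mulrA.
Qed.

Lemma Lset_mul a y : Lset y -> Lset (a * y).
Proof. by case: Lset_ideal => _ [] _; apply. Qed.

Lemma core : exists h, hpos h /\ forall a, P a <-> phi a *: (h *: x) = 0.
Proof.
apply: NNPP => NoH.
case: Kill_all => k [k1 Kill].
have GG : forall h, G h -> Good h.
  move=> h [hh Kh].
  have : ~ (forall a, P a <-> phi a *: (h *: x) = 0) by move=> H; apply: NoH; exists h.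
  case/not_all_ex_not => a Ha.
  case: (classic (P a)) => Pa.
    by exfalso; apply: Ha; split => // _; rewrite scalerAC'; apply: Kh.
  case: (classic (phi a *: (h *: x) = 0)) => Za.
    by exists a.
  by exfalso; apply: Ha; split.
have LG : forall y, Lset y -> Good y.
  apply: sums_ind'; [exact: Good0| exact: GoodD|].
  by move=> y [r [h [Gh ->]]]; apply: GoodM; apply: GG.
have IL : forall y, idealpow (Rplus Rg) k y -> Lset y.
  move=> y [m [a [r [Hr ->]]]].
  apply: sums_big => j; apply: Lset_mul.
  apply: (sums_mono _ (expand (fun i => Hr j i))) => h [c [Hc ->]].
  exists 1, (\prod_(i < k) c i); rewrite mul1r; split => //; split.
    case: (prod_deg Hc) => d [kd Hd]; exists d; split => //.
    exact: leq_trans kd.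
  move=> p Pp; apply: Kill => //.
  exists 1%N, (fun _ => 1), (fun _ i => c i); split.
    by move=> _ i; apply: hpos_Rplus.
  by rewrite big_ord1 mul1r.
case: (noeR Lset_ideal) => m [t [Lt Ht]].
case: (@uniform m t) => [j|b [nb Hb]]; first by apply: LG.
apply: nb; apply/HP; exists k => y Hy.
case: (Ht y (IL y Hy)) => c ->.
rewrite scaler_suml big1 // => j _.
by rewrite -scalerA (scalerAC' (t j)) Hb scaler0.
Qed.

End Core.

Lemma H0_zero (R : comPzRingType) (Rg : nat -> R -> Prop) (X : lmodType R) :
  @H0 R Rg X 0.
Proof. by exists 0%N => y _; rewrite scaler0. Qed.

Theorem proposition4p4 (A R : comPzRingType) (phi : {rmorphism A -> R})
    (Rg : nat -> R -> Prop) (X : lmodType R) (Xg : int -> X -> Prop) :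
  noetherian A -> noetherian R -> std_graded phi Rg -> graded_fmod phi Rg Xg ->
  (forall P : A -> Prop,
     AssA phi (fun _ : X => True) P <->
     AssQ phi (fun _ : X => True) (@H0 R Rg X) P \/ AssA phi (@H0 R Rg X) P) /\
  (forall (P : A -> Prop) (s : int),
     AssQ phi (Xg s) (@H0 R Rg X) P ->
     exists r : nat, (1 <= r)%N /\ AssA phi (Xg (s + r%:Z)) P).
Proof.
move=> noeA noeR [[Rg_sub [Rg_mul [_ [Rg0 _]]]] _] [_ [Xg_mul _]].
have Rg_0 : forall n, Rg n 0 by move=> n; case: (Rg_sub n).
have Rg01 : Rg 0%N 1 by apply/Rg0; exists 1; rewrite rmorph1.
split.
- move=> P; split.
  + case=> Pp [z [_ Hz]].
    case: (classic (exists b, H0 Rg (phi b *: z) /\ phi b *: z <> 0)).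
      case=> b [Hb nz]; right; split => //; exists (phi b *: z); split => //.
      have nPb : ~ P b by move/Hz.
      move=> a; rewrite scalerA -rmorphM -Hz; split.
        move=> Pa; case: Pp => [[_ [_ Pm]] _]; rewrite mulrC; exact: Pm.
      by move=> /(Pmul Pp) [].
    move=> nb; left; split => //; exists z; split => // a; split.
      by move/Hz => ->; apply: H0_zero.
    move=> Ha; apply/Hz; apply: NNPP => nz; apply: nb; by exists a.
  + case=> [[Pp [z [_ Hz]]] | [Pp [z [_ Hz]]]].
      case: (core Rg_mul Rg_0 Rg01 noeA noeR Pp Hz) => h [_ Hh].
      by split => //; exists (h *: z).
    by split => //; exists z.
- move=> P s [Pp [z [Hzs Hz]]].
  case: (core Rg_mul Rg_0 Rg01 noeA noeR Pp Hz) => h [[d [d1 Hd]] Hh].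
  exists d; split => //; split => //; exists (h *: z); split => //.
  by rewrite addrC; apply: Xg_mul.
Qed.
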